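(* Let $p\in\mathbb{N}_0$, $\eta>0$ and $\theta\in\mathbb{R}$, and write $x=\cosh\eta$. Then \begin{align*} (\cosh\eta-\cos\theta)^p\log(\cosh\eta-\cos\theta) &=(\eta-\log 2)(\cosh\eta-\cos\theta)^p\\ &\quad+2\sum_{n=0}^{p}\cos(n\theta)\,e^{-n\eta}\sum_{k=-p}^{n-1}\frac{(-1)^{k+1}e^{k\eta}R_p^k(x)}{n-k}\\ &\quad-2\sum_{n=1}^{p-1}\cos(n\theta)\,e^{n\eta}\sum_{k=-p}^{-n-1}\frac{(-1)^{k+1}e^{k\eta}R_p^k(x)}{n+k}\\ &\quad+2\sum_{n=p+1}^{\infty}\cos(n\theta)\,e^{-n\eta}\sum_{k=-p}^{p}\frac{(-1)^{k+1}e^{k\eta}R_p^k(x)}{n-k}. \end{align*}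
   Context: $\log$ denotes the natural logarithm. The logarithmic polynomials $R_p^k(x)$, for $p\in\mathbb{N}_0$ and $k\in\mathbb{Z}$, are defined by $R_0^0(x)=1$, $R_0^k(x)=0$ for $k\neq 0$, and the recurrence $R_p^k(x)=\tfrac12 R_{p-1}^{k-1}(x)+xR_{p-1}^k(x)+\tfrac12 R_{p-1}^{k+1}(x)$ for $p\ge 1$ (so $R_p^k=0$ unless $-p\le k\le p$). Empty sums (upper limit smaller than lower limit) are zero. *)

(* Defs.v *)
From Stdlib Require Import Reals ZArith List.
From Coquelicot Require Import Coquelicot.
Open Scope R_scope.

Fixpoint logpoly (p : nat) (k : Z) (x : R) : R :=
  match p with
  | O => if Z.eqb k 0 then 1 else 0
  | S q => / 2 * logpoly q (k - 1) x + x * logpoly q k x + / 2 * logpoly q (k + 1) x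
  end.

(* zsum a b f = sum_{k=a}^{b} f k over integers; empty (= 0) when b < a. *)
Definition zsum (a b : Z) (f : Z -> R) : R :=
  fold_right Rplus 0
    (map (fun i : nat => f (a + Z.of_nat i)%Z) (seq 0 (Z.to_nat (b - a + 1)))).

Definition zsign (k : Z) : R := if Z.even k then 1 else -1.

(* Main.v *)
Require Import Defs.
From Stdlib Require Import Reals ZArith List Lra Lia.
From Coquelicot Require Import Coquelicot.
Open Scope R_scope.


Lemma plusR (a b : R) : plus a b = a + b. Proof. reflexivity. Qed.
Lemma scalR (a b : R) : scal a b = a * b. Proof. reflexivity. Qed.
Lemma oppR (a : R) : opp a = - a. Proof. reflexivity. Qed.

Lemma series_shift1 (a : nat -> R) l :
  is_series a l -> is_series (fun n => a (S n)) (l - a 0%nat).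
Proof.
  intro H. apply is_series_incr_1. rewrite plusR.
  assert (E: l - a 0%nat + a 0%nat = l) by ring. rewrite E; auto.
Qed.

Lemma is_series_eq (a : nat -> R) l l' : is_series a l -> l = l' -> is_series a l'.
Proof. intros H ->; exact H. Qed.

Lemma isR_plus (a b : nat -> R) la lb : is_series a la -> is_series b lb ->
  is_series (fun n => a n + b n) (la + lb).
Proof. intros Ha Hb. exact (is_series_plus a b la lb Ha Hb). Qed.
Lemma isR_scal (a : nat -> R) c l : is_series a l -> is_series (fun n => c * a n) (c * l).
Proof. intros Ha. exact (is_series_scal c a l Ha). Qed.
Lemma isR_minus (a b : nat -> R) la lb : is_series a la -> is_series b lb ->
  is_series (fun n => a n - b n) (la - lb).
Proof. intros Ha Hb. exact (is_series_minus a b la lb Ha Hb). Qed.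

Definition Dq (th t : R) := 1 - 2 * t * cos th + t ^ 2.

Lemma Dq_pos th t : Rabs t < 1 -> 0 < Dq th t.
Proof.
  intro Ht. unfold Dq.
  assert (Hc := COS_bound th).
  assert (Hct : t * cos th <= Rabs t).
  { destruct (Rle_dec 0 t).
    - rewrite Rabs_right by lra. nra.
    - rewrite Rabs_left by lra. nra. }
  assert (t ^ 2 = Rabs t ^ 2) by (unfold Rabs; destruct (Rcase_abs t); ring).
  pose proof (Rabs_pos t). nra.
Qed.

Lemma cos_rec th n :
  cos (INR (S (S (S n))) * th) = 2 * cos th * cos (INR (S (S n)) * th) - cos (INR (S n) * th).
Proof.
  replace (INR (S (S (S n))) * th) with (INR (S (S n)) * th + th) by (rewrite !S_INR; ring).
  replace (INR (S n) * th) with (INR (S (S n)) * th - th) by (rewrite !S_INR; ring).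
  rewrite cos_plus, cos_minus. ring.
Qed.

Lemma gen_series th t : Rabs t < 1 ->
  is_series (fun n => cos (INR (S n) * th) * t ^ n) ((cos th - t) / Dq th t).
Proof.
  intro Ht.
  set (u := fun n => cos (INR (S n) * th) * t ^ n).
  assert (Ex : ex_series u).
  { apply (@ex_series_le R_AbsRing R_CompleteNormedModule) with (fun n => Rabs t ^ n).
    - intro n. unfold u. change norm with Rabs. rewrite Rabs_mult, <- RPow_abs.
      pose proof (pow_le (Rabs t) n (Rabs_pos t)).
      assert (Rabs (cos (INR (S n) * th)) <= 1) by (apply Rabs_le; apply COS_bound).
      rewrite <- (Rmult_1_l (Rabs t ^ n)) at 2; apply Rmult_le_compat_r; auto.
    - apply ex_series_geom. rewrite Rabs_Rabsolu; auto. }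
  destruct Ex as [Sm HS].
  assert (H2 := series_shift1 _ _ (series_shift1 _ _ HS)). simpl in H2.
  assert (H3 : is_series (fun n => u (S (S n)))
                 (2 * cos th * t * (Sm - u 0%nat) - t ^ 2 * Sm)).
  { assert (H4 := isR_minus _ _ _ _ (isR_scal _ (2 * cos th * t) _ (series_shift1 _ _ HS))
                     (isR_scal _ (t^2) _ HS)).
    refine (is_series_ext _ _ _ _ H4).
    - intro n.
      unfold u. rewrite cos_rec. assert (E: forall a d : R, 2 * cos th * t * (a * (t * t ^ n)) - t ^ 2 * (d * t ^ n) = (2 * cos th * a - d) * (t * (t * t ^ n))) by (intros; ring). apply E.
 }
  pose proof (is_series_unique _ _ H2) as E2.
  pose proof (is_series_unique _ _ H3) as E3. rewrite E2 in E3.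
  unfold u in E3. simpl in E3.
  assert (Hd := Dq_pos th t Ht).
  replace ((cos th - t) / Dq th t) with Sm; auto.
  apply Rmult_eq_reg_r with (Dq th t); [|lra].
  unfold Rdiv. rewrite Rmult_assoc, Rinv_l by lra. rewrite Rmult_1_r.
  unfold Dq. replace (1 + 1) with 2 in E3 by ring. rewrite Rmult_1_l in E3.
  replace (2 * th) with (2 * th) in E3 by ring.
  rewrite cos_2a_cos in E3. nra.
Qed.

Definition acoef (th : R) (n : nat) : R :=
  match n with O => 0 | S m => cos (INR (S m) * th) / INR (S m) end.

Lemma acoef_radius th : Rbar_le 1 (CV_radius (acoef th)).
Proof.
  destruct (CV_radius_bounded (acoef th)) as [Hub _].
  apply Hub. exists 1. intro n. rewrite pow1, Rmult_1_r.
  destruct n as [|m].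
  - simpl. rewrite Rabs_R0; lra.
  - change (acoef th (S m)) with (cos (INR (S m) * th) / INR (S m)). unfold Rdiv. rewrite Rabs_mult.
    assert (Hp : 0 < INR (S m)) by (apply lt_0_INR; lia).
    assert (H1 : 1 <= INR (S m)) by (rewrite S_INR; pose proof (pos_INR m); lra).
    rewrite (Rabs_right (/ _)) by (apply Rle_ge, Rlt_le, Rinv_0_lt_compat; lra).
    assert (Rabs (cos (INR (S m) * th)) <= 1) by (apply Rabs_le; apply COS_bound).
    assert (/ INR (S m) <= 1).
    { rewrite <- Rinv_1. apply Rinv_le_contravar; lra. }
    assert (0 <= / INR (S m)) by (apply Rlt_le, Rinv_0_lt_compat; lra).
    pose proof (Rabs_pos (cos (INR (S m) * th))). nra.
Qed.

Lemma acoef_in th t : Rabs t < 1 -> Rbar_lt (Rabs t) (CV_radius (acoef th)).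
Proof.
  intro H. pose proof (acoef_radius th) as Hr.
  destruct (CV_radius (acoef th)) as [r| |]; simpl in *; lra || auto.
Qed.

Lemma PSderiv_val th t : Rabs t < 1 ->
  PSeries (PS_derive (acoef th)) t = (cos th - t) / Dq th t.
Proof.
  intro Ht. unfold PSeries. apply is_series_unique.
  eapply is_series_ext; [|apply (gen_series th t Ht)].
  intro n. match goal with |- ?a = ?b => change (@eq R a b) end. unfold PS_derive. change (acoef th (S n)) with (cos (INR (S n) * th) / INR (S n)). field.
  apply not_0_INR. lia.
Qed.

Lemma is_derive_eqR (f : R -> R) x (l l' : R) : is_derive f x l -> l = l' -> is_derive f x l'.
Proof. intros H <-; exact H. Qed.

Definition gfun th t := ln (Dq th t) + 2 * PSeries (acoef th) t.

Lemma gfun_derive th t : Rabs t < 1 -> is_derive (gfun th) t 0.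
Proof.
  intro Ht. assert (Hd := Dq_pos th t Ht).
  assert (H1 : is_derive (fun t => ln (Dq th t)) t ((- 2 * cos th + 2 * t) / Dq th t)).
  { unfold Dq in *. auto_derive. lra. field. lra. }
  assert (H2 := is_derive_PSeries (acoef th) t (acoef_in th t Ht)).
  rewrite PSderiv_val in H2 by auto.
  assert (H3 := is_derive_plus _ _ _ _ _ H1 (is_derive_scal _ _ 2 _ H2)).
  unfold gfun. eapply is_derive_eqR; [eapply is_derive_ext; [|exact H3]|].
  - intro y. reflexivity.
  - match goal with |- ?a = ?b => change (@eq R a b) end. rewrite plusR. field. lra.
Qed.

Lemma log_series th q : 0 < q < 1 ->
  is_series (fun m => -2 * (q ^ (S m) * cos (INR (S m) * th) / INR (S m))) (ln (Dq th q)).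
Proof.
  intro Hq.
  assert (Hg : gfun th q = gfun th 0).
  { destruct (MVT_gen (gfun th) 0 q (fun _ => 0)) as [c [_ Hc]].
    - intros y Hy. rewrite Rmin_left, Rmax_right in Hy by lra.
      apply gfun_derive. rewrite Rabs_right; lra.
    - intros y Hy. rewrite Rmin_left, Rmax_right in Hy by lra.
      apply continuity_pt_filterlim. apply (@ex_derive_continuous R_AbsRing R_NormedModule).
      eexists. apply gfun_derive. rewrite Rabs_right; lra.
    - lra. }
  assert (H0 : gfun th 0 = 0).
  { unfold gfun. rewrite PSeries_0. unfold Dq. simpl acoef.
    replace (1 - 2 * 0 * cos th + 0 ^ 2) with 1 by ring. rewrite ln_1. ring. }
  assert (HL : ln (Dq th q) = -2 * PSeries (acoef th) q).
  { rewrite H0 in Hg. unfold gfun in Hg. lra. }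
  rewrite HL.
  assert (HP := PSeries_correct _ _ (CV_radius_inside _ _ (acoef_in th q ltac:(rewrite Rabs_right; lra)))).
  unfold is_pseries in HP.
  assert (HP1 := series_shift1 _ _ HP).
  assert (HP2 := isR_scal _ (-2) _ HP1).
  eapply is_series_eq; [eapply is_series_ext; [|exact HP2]|].
  - intro n. match goal with |- ?a = ?b => change (@eq R a b) end.
    rewrite pow_n_pow. change (acoef th (S n)) with (cos (INR (S n) * th) / INR (S n)).
    change (scal ?a ?b) with (a * b). change (@pow_n _ q (S n)) with (q ^ S n). field. apply not_0_INR; lia.
  - match goal with |- ?a = ?b => change (@eq R a b) end. change (acoef th 0) with 0.
    change (scal ?a ?b) with (a * b). cbv beta. change (acoef th 0) with 0. ring.
Qed.

Definition nsum (n : nat) (g : nat -> R) : R := fold_right Rplus 0 (map g (seq 0 n)).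

Lemma nsum_0 g : nsum 0 g = 0. Proof. reflexivity. Qed.

Lemma nsum_S n g : nsum (S n) g = nsum n g + g n.
Proof.
  unfold nsum. rewrite seq_S, map_app, fold_right_app. simpl.
  generalize (g n). induction (map g (seq 0 n)) as [|a l IH]; intro r; simpl.
  - ring.
  - rewrite IH. ring.
Qed.

Lemma nsum_ext n g h : (forall i, (i < n)%nat -> g i = h i) -> nsum n g = nsum n h.
Proof.
  induction n as [|n IH]; intro H; [reflexivity|].
  rewrite !nsum_S, IH.
  - rewrite H by lia. reflexivity.
  - intros; apply H; lia.
Qed.

Lemma nsum_plus n g h : nsum n (fun i => g i + h i) = nsum n g + nsum n h.
Proof. induction n as [|n IH]; [simpl; unfold nsum; simpl; ring|]. rewrite !nsum_S, IH. ring. Qed.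

Lemma nsum_scal n c g : nsum n (fun i => c * g i) = c * nsum n g.
Proof. induction n as [|n IH]; [unfold nsum; simpl; ring|]. rewrite !nsum_S, IH. ring. Qed.

Lemma nsum_zero n g : (forall i, (i < n)%nat -> g i = 0) -> nsum n g = 0.
Proof.
  intro H. rewrite (nsum_ext n g (fun i => 0 * 0)) by (intros; rewrite H; auto; ring).
  rewrite nsum_scal. ring.
Qed.

Lemma nsum_shift n g : nsum (S n) g = g 0%nat + nsum n (fun i => g (S i)).
Proof.
  induction n as [|n IH].
  - unfold nsum; simpl; ring.
  - rewrite nsum_S, IH, nsum_S. ring.
Qed.

Lemma nsum_add n m g : nsum (n + m) g = nsum n g + nsum m (fun i => g (n + i)%nat).
Proof.
  induction m as [|m IH].
  - rewrite Nat.add_0_r, nsum_0. ring.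
  - rewrite Nat.add_succ_r, !nsum_S, IH. ring.
Qed.

Lemma nsum_rev n g : nsum n g = nsum n (fun i => g (n - 1 - i)%nat).
Proof.
  revert g; induction n as [|n IH]; intro g; [reflexivity|].
  rewrite nsum_shift, nsum_S, (IH (fun i => g (S i))).
  replace (S n - 1 - n)%nat with 0%nat by lia.
  rewrite (nsum_ext n (fun i => g (S (n - 1 - i))) (fun i => g (S n - 1 - i)%nat)).
  - ring.
  - intros i Hi. f_equal. lia.
Qed.

Lemma nsum_triangle N (G : nat -> nat -> R) :
  nsum (S N) (fun i => nsum (N - i) (fun t => G i (i + 1 + t)%nat)) =
  nsum N (fun s => nsum (S s) (fun i => G i (S s))).
Proof.
  induction N as [|N IH].
  - unfold nsum; simpl; ring.
  - rewrite (nsum_S (S N)). replace (S N - S N)%nat with 0%nat by lia. rewrite nsum_0.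
    rewrite (nsum_ext (S N) _ (fun i => nsum (N - i) (fun t => G i (i + 1 + t)%nat) + G i (S N))).
    + rewrite nsum_plus, IH, (nsum_S N (fun s => nsum (S s) (fun i => G i (S s)))). ring.
    + intros i Hi. replace (S N - i)%nat with (S (N - i)) by lia. rewrite nsum_S.
      f_equal. f_equal. lia.
Qed.

Lemma is_series_zero : is_series (fun _ => 0) 0.
Proof.
  assert (H := isR_scal _ 0 _ (is_series_geom 0 ltac:(rewrite Rabs_R0; lra))).
  eapply is_series_eq; [eapply is_series_ext; [|exact H]|].
  - intro n. simpl. ring.
  - simpl. ring.
Qed.

Lemma nsum_series N (U : nat -> nat -> R) (s : nat -> R) :
  (forall i, (i < N)%nat -> is_series (U i) (s i)) ->
  is_series (fun m => nsum N (fun i => U i m)) (nsum N s).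
Proof.
  induction N as [|N IH]; intro H.
  - apply is_series_zero.
  - rewrite nsum_S.
    eapply is_series_ext; [|apply isR_plus; [apply IH|apply H]].
    + intro n. simpl. rewrite nsum_S. reflexivity.
    + intros; apply H; lia.
    + lia.
Qed.

Lemma series_shift_n (a : nat -> R) l d :
  is_series a l -> is_series (fun j => a (d + j)%nat) (l - nsum d a).
Proof.
  revert a l; induction d as [|d IH]; intros a l H.
  - simpl. rewrite nsum_0, Rminus_0_r. exact H.
  - assert (H1 := IH _ _ (series_shift1 _ _ H)).
    rewrite nsum_shift.
    eapply is_series_eq; [eapply is_series_ext; [|exact H1]|].
    + intro n. simpl. reflexivity.
    + match goal with |- ?a = ?b => change (@eq R a b) end. ring.
Qed.

Lemma zsum_nsum a b f : zsum a b f = nsum (Z.to_nat (b - a + 1)) (fun i => f (a + Z.of_nat i)%Z).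
Proof. reflexivity. Qed.

Lemma zsign_succ k : zsign (k + 1) = - zsign k.
Proof.
  unfold zsign. rewrite Z.even_add. simpl. destruct (Z.even k); simpl; ring.
Qed.

Lemma zsign_pred k : zsign (k - 1) = - zsign k.
Proof.
  replace k with ((k - 1) + 1)%Z at 2 by ring. rewrite zsign_succ. ring.
Qed.

Lemma logpoly_out p k x : (Z.of_nat p < Z.abs k)%Z -> logpoly p k x = 0.
Proof.
  revert k; induction p as [|p IH]; intros k Hk.
  - simpl. destruct (Z.eqb_spec k 0); [lia|reflexivity].
  - simpl. rewrite !IH by lia. ring.
Qed.

Definition powsum (p : nat) (x th phi : R) : R :=
  nsum (2 * p + 1) (fun i => let k := (- Z.of_nat p + Z.of_nat i)%Z in
      zsign k * logpoly p k x * cos (phi + IZR k * th)).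

Lemma pow_cos_n p x th phi : (x - cos th) ^ p * cos phi = powsum p x th phi.
Proof.
  induction p as [|p IH].
  - unfold powsum, nsum. simpl. unfold zsign; simpl. replace (phi + 0 * th) with phi by ring. ring.
  - rewrite <- tech_pow_Rmult, Rmult_assoc, IH. unfold powsum.
    rewrite <- nsum_scal.
    set (P := Z.of_nat p).
    rewrite (nsum_ext (2 * S p + 1) _ (fun i =>
        (zsign (- Z.of_nat (S p) + Z.of_nat i) * (/2 * logpoly p (- Z.of_nat (S p) + Z.of_nat i - 1) x) * cos (phi + IZR (- Z.of_nat (S p) + Z.of_nat i) * th)
       + zsign (- Z.of_nat (S p) + Z.of_nat i) * (x * logpoly p (- Z.of_nat (S p) + Z.of_nat i) x) * cos (phi + IZR (- Z.of_nat (S p) + Z.of_nat i) * th))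
       + zsign (- Z.of_nat (S p) + Z.of_nat i) * (/2 * logpoly p (- Z.of_nat (S p) + Z.of_nat i + 1) x) * cos (phi + IZR (- Z.of_nat (S p) + Z.of_nat i) * th)))
      by (intros i _; cbn [logpoly]; ring).
    rewrite !nsum_plus.
    replace (2 * S p + 1)%nat with (S (S (2 * p + 1))) by lia.
    rewrite (nsum_shift (S (2 * p + 1))), (nsum_shift (2 * p + 1)).
    rewrite (logpoly_out p (- Z.of_nat (S p) + Z.of_nat 0 - 1)) by lia.
    rewrite (logpoly_out p (- Z.of_nat (S p) + Z.of_nat 1 - 1)) by lia.
    rewrite (nsum_shift (S (2 * p + 1)) (fun i => zsign (- Z.of_nat (S p) + Z.of_nat i) * (x * logpoly p (- Z.of_nat (S p) + Z.of_nat i) x) * cos (phi + IZR (- Z.of_nat (S p) + Z.of_nat i) * th))).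
    rewrite (nsum_S (2 * p + 1) (fun i => zsign (- Z.of_nat (S p) + Z.of_nat (S i)) * (x * logpoly p (- Z.of_nat (S p) + Z.of_nat (S i)) x) * cos (phi + IZR (- Z.of_nat (S p) + Z.of_nat (S i)) * th))).
    rewrite (logpoly_out p (- Z.of_nat (S p) + Z.of_nat 0)) by lia.
    rewrite (logpoly_out p (- Z.of_nat (S p) + Z.of_nat (S (2 * p + 1)))) by lia.
    rewrite (nsum_S (S (2 * p + 1)) (fun i => zsign (- Z.of_nat (S p) + Z.of_nat i) * (/2 * logpoly p (- Z.of_nat (S p) + Z.of_nat i + 1) x) * cos (phi + IZR (- Z.of_nat (S p) + Z.of_nat i) * th))).
    rewrite (nsum_S (2 * p + 1) (fun i => zsign (- Z.of_nat (S p) + Z.of_nat i) * (/2 * logpoly p (- Z.of_nat (S p) + Z.of_nat i + 1) x) * cos (phi + IZR (- Z.of_nat (S p) + Z.of_nat i) * th))).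
    rewrite (logpoly_out p (- Z.of_nat (S p) + Z.of_nat (2 * p + 1) + 1)) by lia.
    rewrite (logpoly_out p (- Z.of_nat (S p) + Z.of_nat (S (2 * p + 1)) + 1)) by lia.
    rewrite !Rmult_0_r, !Rmult_0_l, !Rplus_0_l, !Rplus_0_r.
    rewrite <- !nsum_plus.
    apply nsum_ext. intros j Hj.
    replace (- Z.of_nat (S p) + Z.of_nat (S (S j)))%Z with ((- P + Z.of_nat j) + 1)%Z by lia.
    replace (- Z.of_nat (S p) + Z.of_nat (S j))%Z with (- P + Z.of_nat j)%Z by lia.
    replace (- Z.of_nat (S p) + Z.of_nat j)%Z with ((- P + Z.of_nat j) - 1)%Z by lia.
    set (k := (- P + Z.of_nat j)%Z).
    replace (k + 1 - 1)%Z with k by ring. replace (k - 1 + 1)%Z with k by ring.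
    rewrite zsign_succ, zsign_pred, plus_IZR, minus_IZR.
    replace (phi + (IZR k + 1) * th) with ((phi + IZR k * th) + th) by ring.
    replace (phi + (IZR k - 1) * th) with ((phi + IZR k * th) - th) by ring.
    set (A := phi + IZR k * th). rewrite cos_plus, cos_minus. field.
Qed.

Lemma exp_pow_nat y N : exp y ^ N = exp (INR N * y).
Proof.
  induction N as [|N IH].
  - simpl. rewrite Rmult_0_l, exp_0. reflexivity.
  - rewrite <- tech_pow_Rmult, IH, S_INR, <- exp_plus. f_equal. ring.
Qed.

Lemma Tlemma p x eta th (k n : Z) (M : nat) :
  (Z.of_nat (S M) = n - k)%Z ->
  2 * (zsign (k + 1) * logpoly p k x) * cos ((IZR k + INR (S M)) * th)
    * exp (- eta) ^ (S M) / INR (S M)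
  = 2 * (cos (IZR n * th) * exp (- IZR n * eta) *
         (zsign (k + 1) * exp (IZR k * eta) * logpoly p k x / IZR (n - k))).
Proof.
  intro H.
  rewrite exp_pow_nat, INR_IZR_INZ, H, minus_IZR.
  replace (IZR k + (IZR n - IZR k)) with (IZR n) by ring.
  replace ((IZR n - IZR k) * - eta) with (- IZR n * eta + IZR k * eta) by ring.
  rewrite exp_plus.
  assert (IZR n - IZR k <> 0).
  { rewrite <- minus_IZR, <- H. apply not_0_IZR. lia. }
  field. auto.
Qed.

Lemma Tneg p x eta th (k n : Z) :
  2 * (cos (IZR (- n) * th) * exp (- IZR (- n) * eta) *
         (zsign (k + 1) * exp (IZR k * eta) * logpoly p k x / IZR (- n - k)))
  = -2 * (cos (IZR n * th) * exp (IZR n * eta) *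
         (zsign (k + 1) * exp (IZR k * eta) * logpoly p k x / IZR (n + k))).
Proof.
  rewrite !opp_IZR, minus_IZR, opp_IZR, plus_IZR.
  replace (- IZR n * th) with (- (IZR n * th)) by ring. rewrite cos_neg.
  replace (- - IZR n * eta) with (IZR n * eta) by ring.
  replace (- IZR n - IZR k) with (- (IZR n + IZR k)) by ring.
  destruct (Req_dec (IZR n + IZR k) 0) as [E|E].
  - rewrite E, Ropp_0. unfold Rdiv. rewrite Rinv_0. ring.
  - field. auto.
Qed.

Theorem mainTheorem1 (p : nat) (eta theta : R) (heta : 0 < eta) :
  let x := cosh eta in
  let P := Z.of_nat p in
  let c := cosh eta - cos theta in
  is_series
    (fun m : nat =>
       let n := (Z.of_nat m + P + 1)%Z in
       2 * cos (IZR n * theta) * exp (- IZR n * eta) *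
       zsum (- P) P (fun k => zsign (k + 1) * exp (IZR k * eta)
                                * logpoly p k x / IZR (n - k)))
    (c ^ p * ln c
     - (eta - ln 2) * c ^ p
     - 2 * zsum 0 P (fun n =>
             cos (IZR n * theta) * exp (- IZR n * eta) *
             zsum (- P) (n - 1) (fun k => zsign (k + 1) * exp (IZR k * eta)
                                          * logpoly p k x / IZR (n - k)))
     + 2 * zsum 1 (P - 1) (fun n =>
             cos (IZR n * theta) * exp (IZR n * eta) *
             zsum (- P) (- n - 1) (fun k => zsign (k + 1) * exp (IZR k * eta)
                                            * logpoly p k x / IZR (n + k)))).
Proof.
  intros x P c.
  set (q := exp (- eta)).
  assert (Hq : 0 < q < 1).
  { split. apply exp_pos. unfold q. rewrite <- exp_0. apply exp_increasing. lra. }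
  assert (HD : 0 < Dq theta q) by (apply Dq_pos; rewrite Rabs_right; lra).
  assert (Hc : c = exp eta * / 2 * Dq theta q).
  { unfold c, cosh, Dq, q. simpl. rewrite Rmult_1_r, <- exp_plus.
    replace (exp eta * / 2 * (1 - 2 * exp (- eta) * cos theta + exp (- eta + - eta)))
      with ((exp eta + exp (eta + (- eta + - eta))) / 2 - (exp eta * exp (- eta)) * cos theta)
      by (rewrite exp_plus; field).
    rewrite <- exp_plus. replace (eta + (- eta + - eta)) with (- eta) by ring.
    replace (eta + - eta) with 0 by ring. rewrite exp_0. ring. }
  assert (Hlnc : ln c = eta - ln 2 + ln (Dq theta q)).
  { rewrite Hc, ln_mult, ln_mult, ln_exp, ln_Rinv; try lra.
    - apply exp_pos.
    - apply Rmult_lt_0_compat; [apply exp_pos | lra]. }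
  set (Kz := fun i : nat => (- P + Z.of_nat i)%Z).
  set (T := fun (i m : nat) =>
        2 * (zsign (Kz i + 1) * logpoly p (Kz i) x) * cos ((IZR (Kz i) + INR (S m)) * theta)
          * q ^ (S m) / INR (S m)).
  assert (S1 : is_series (fun m => nsum (2 * p + 1) (fun i => T i m)) (c ^ p * ln (Dq theta q))).
  { eapply is_series_ext; [|apply isR_scal; apply (log_series theta q Hq)].
    intro m. match goal with |- ?a = ?b => change (@eq R a b) end. cbv beta.
    replace (c ^ p * (-2 * (q ^ S m * cos (INR (S m) * theta) / INR (S m))))
      with (-2 * q ^ S m / INR (S m) * ((x - cos theta) ^ p * cos (INR (S m) * theta)))
      by (unfold c, x; field; apply not_0_INR; lia).
    rewrite pow_cos_n. unfold powsum. rewrite <- nsum_scal. apply nsum_ext.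
    intros i _. unfold T, Kz. cbv zeta. rewrite zsign_succ.
    replace ((IZR (- P + Z.of_nat i) + INR (S m)) * theta)
      with (INR (S m) * theta + IZR (- P + Z.of_nat i) * theta) by ring.
    unfold P. field. apply not_0_INR; lia. }
  assert (S2 : forall i, ex_series (T i)).
  { intro i.
    set (a := zsign (Kz i + 1) * logpoly p (Kz i) x).
    apply (@ex_series_le R_AbsRing R_CompleteNormedModule) with (fun m => (2 * Rabs a * q) * q ^ m).
    - intro m. change norm with Rabs. unfold T. fold a.
      set (co := cos ((IZR (Kz i) + INR (S m)) * theta)).
      assert (Hco : Rabs co <= 1) by (apply Rabs_le; apply COS_bound).
      assert (HI : 1 <= INR (S m)) by (rewrite S_INR; pose proof (pos_INR m); lra).
      assert (HQ : 0 < q ^ m) by (apply pow_lt; lra).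
      assert (HIi : 0 < / INR (S m) <= 1).
      { split. apply Rinv_0_lt_compat; lra. rewrite <- Rinv_1. apply Rinv_le_contravar; lra. }
      unfold Rdiv. rewrite !Rabs_mult, Rabs_right with (r := 2) by lra.
      rewrite (Rabs_right (q ^ S m)) by (apply Rle_ge, pow_le; lra).
      rewrite (Rabs_right (/ INR (S m))) by lra.
      rewrite <- tech_pow_Rmult.
      pose proof (Rabs_pos a). pose proof (Rabs_pos co).
      assert (Rabs co * / INR (S m) <= 1) by nra.
      assert (0 <= Rabs a * (q * q ^ m)) by (apply Rmult_le_pos; nra).
      nra.
    - assert (H := isR_scal _ (2 * Rabs a * q) _ (is_series_geom q ltac:(rewrite Rabs_right; lra))).
      eexists; exact H. }
  set (s := fun i => Series (T i)).
  assert (S3 : forall i, is_series (T i) (s i)) by (intro i; apply Series_correct; auto).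
  assert (S4 : nsum (2 * p + 1) s = c ^ p * ln (Dq theta q)).
  { apply (is_series_unique (fun m => nsum (2 * p + 1) (fun i => T i m))) in S1.
    rewrite <- S1. symmetry. apply is_series_unique. apply nsum_series. auto. }
  assert (S5 : is_series (fun j => nsum (2 * p + 1) (fun i => T i (2 * p - i + j)%nat))
                 (nsum (2 * p + 1) (fun i => s i - nsum (2 * p - i) (T i)))).
  { apply nsum_series. intros i _. apply series_shift_n. auto. }
  set (F := nsum (2 * p + 1) (fun i => nsum (2 * p - i) (T i))).
  assert (S6 : nsum (2 * p + 1) (fun i => s i - nsum (2 * p - i) (T i)) = c ^ p * ln (Dq theta q) - F).
  { unfold F. rewrite <- S4. unfold Rminus.
    rewrite nsum_plus. f_equal.
    rewrite (nsum_ext _ (fun i => - nsum (2 * p - i) (T i)) (fun i => -1 * nsum (2 * p - i) (T i)))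
      by (intros; ring).
    rewrite nsum_scal. ring. }
  rewrite S6 in S5.
  eapply is_series_eq; [eapply is_series_ext; [|exact S5]|].
  { intro j. match goal with |- ?a = ?b => change (@eq R a b) end. cbv zeta.
    rewrite zsum_nsum.
    replace (Z.to_nat (P - - P + 1)) with (2 * p + 1)%nat by (unfold P; lia).
    rewrite <- nsum_scal. apply nsum_ext. intros i Hi.
    unfold T. rewrite (Tlemma p x eta theta (Kz i) (Z.of_nat j + P + 1)%Z).
    - unfold Kz. ring.
    - unfold Kz, P. lia. }
  match goal with |- ?a = ?b => change (@eq R a b) end.
  rewrite Hlnc.
  match goal with |- _ = _ - _ - 2 * ?A + 2 * ?B => assert (HF : F = 2 * A - 2 * B) end.
  2: { rewrite HF. ring. }
  destruct (Nat.eq_dec p 0) as [Hp0|Hp].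
  { unfold F, P. rewrite !zsum_nsum. subst p. simpl. unfold nsum. simpl. unfold zsum; simpl. ring. }
  unfold F.
  assert (E := nsum_triangle (2 * p) (fun i r => T i (r - i - 1)%nat)). cbv beta in E.
  replace (2 * p + 1)%nat with (S (2 * p)) by lia.
  rewrite (nsum_ext (S (2 * p)) _ (fun i => nsum (2 * p - i) (fun t => T i (i + 1 + t - i - 1)%nat))).
  2: { intros i _. apply nsum_ext. intros t _. f_equal. lia. }
  rewrite E.
  replace (2 * p)%nat with ((p - 1) + (p + 1))%nat by lia.
  rewrite nsum_add.
  replace (p - 1 + (p + 1))%nat with (2 * p)%nat by lia.
  rewrite Rplus_comm. unfold Rminus. f_equal.
  -
    rewrite zsum_nsum. replace (Z.to_nat (P - 0 + 1)) with (p + 1)%nat by (unfold P; lia).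
    rewrite <- nsum_scal. apply nsum_ext. intros u Hu. cbv beta.
    rewrite zsum_nsum.
    replace (Z.to_nat (0 + Z.of_nat u - 1 - - P + 1)) with (p + u)%nat by (unfold P; lia).
    replace (S (p - 1 + u)) with (p + u)%nat by lia.
    rewrite <- nsum_scal, <- nsum_scal. apply nsum_ext. intros i Hi.
    unfold T. rewrite (Tlemma p x eta theta (Kz i) (0 + Z.of_nat u)%Z).
    + unfold Kz. ring.
    + unfold Kz, P. lia.
  -
    rewrite nsum_rev.
    rewrite zsum_nsum. replace (Z.to_nat (P - 1 - 1 + 1)) with (p - 1)%nat by (unfold P; lia).
    rewrite Ropp_mult_distr_l, <- nsum_scal. apply nsum_ext. intros v Hv. cbv beta.
    rewrite zsum_nsum.
    replace (Z.to_nat (- (1 + Z.of_nat v) - 1 - - P + 1)) with (p - 1 - v)%nat by (unfold P; lia).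
    replace (S (p - 1 - 1 - v)) with (p - 1 - v)%nat by lia.
    rewrite <- nsum_scal, <- nsum_scal. apply nsum_ext. intros i Hi.
    unfold T. rewrite (Tlemma p x eta theta (Kz i) (- (1 + Z.of_nat v))%Z).
    + rewrite Tneg. unfold Kz. ring.
    + unfold Kz, P. lia.
Qed.
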